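(* Let $K\ge 2$, $T\ge1$, and let $\mathbf{x}(t)\in[0,1]^K$, $t=1,\dots,T$, be any fixed sequence of reward vectors. Let $\tau=e\,\mathbb{G}_{max}-(4-e)\,\mathbb{G}_{min}$ and run the algorithm REX3 described in the context with transfer function $\psi$ equal to the identity and parameter $\gamma=\min\left\{\tfrac12,\sqrt{\frac{K\ln(K)}{\tau}}\right\}$ (with $\gamma=\tfrac12$ if $\tau=0$). Then the expected regret $\mathbb{G}_{max}-\mathbb{E}\mathbb{G}_{alg}$ is $\mathcal{O}\big(\sqrt{K\ln(K)\,T}\big)$.
   Context: Adversarial utility-based dueling bandit setting: there are $K$ arms; before play, an (oblivious) environment fixes a horizon $T$ and reward vectors $\mathbf{x}(t)=(x_1(t),\dots,x_K(t))\in[0,1]^K$ for $t=1,\dots,T$. At each round the learner selects a pair of arms $(a_t,b_t)$ and observes only the relative feedback $\psi(x_{a_t}(t)-x_{b_t}(t))$, here with $\psi(z)=z$. Algorithm REX3 with parameter $\gamma$: initialize $w_i(1)=1$ for all $i$. At each round $t$: set $p_i(t)=(1-\gamma)\frac{w_i(t)}{\sum_{j=1}^K w_j(t)}+\frac{\gamma}{K}$; draw two arms $a_t,b_t$ independently according to $\mathbf{p}(t)=(p_1(t),\dots,p_K(t))$; receive $\psi(x_{a_t}(t)-x_{b_t}(t))$; if $a_t\neq b_t$, set $w_{a_t}(t+1)=w_{a_t}(t)\exp\!\big(\frac{\gamma}{K}\frac{\psi(x_{a_t}-x_{b_t})}{2p_{a_t}(t)}\big)$ and $w_{b_t}(t+1)=w_{b_t}(t)\exp\!\big(-\frac{\gamma}{K}\frac{\psi(x_{a_t}-x_{b_t})}{2p_{b_t}(t)}\big)$;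 other weights unchanged. Notation: $\mathbb{G}_{max}=\max_i\sum_{t=1}^T x_i(t)$; $\mathbb{G}_{min}=\min_i\sum_{t=1}^T x_i(t)$; $\mathbb{G}_{alg}=\frac12\sum_{t=1}^T\big(x_{a_t}(t)+x_{b_t}(t)\big)$. Expectations are over the algorithm's internal randomization. The $\mathcal{O}$ hides an absolute constant independent of $K$, $T$ and the rewards (for $T$ large enough relative to $K\ln K$). *)

(* Defs.v *)
From HB Require Import structures.
From mathcomp Require Import all_boot all_order all_algebra.
From mathcomp Require Import all_classical all_reals all_analysis.
Set Implicit Arguments. Unset Strict Implicit. Unset Printing Implicit Defensive.
Import Order.TTheory GRing.Theory Num.Theory.
Local Open Scope ring_scope.

Section REX3.
Variable R : realType.
Variable K : nat.

(* Reward vectors: round t (t = 0, ..., T-1 stands for rounds 1..T) gives x t : 'I_K -> R. *)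
Variable x : nat -> 'I_K -> R.
Variable gamma : R.

Definition psi (z : R) : R := z.

Definition rex3_p (w : 'I_K -> R) (i : 'I_K) : R :=
  (1 - gamma) * (w i / \sum_(j < K) w j) + gamma / K%:R.

Definition rex3_update (t : nat) (w : 'I_K -> R) (a b : 'I_K) : 'I_K -> R :=
  fun i =>
    let d := psi (x t a - x t b) in
    if a == b then w i
    else if i == a then w i * expR (gamma / K%:R * (d / (2 * rex3_p w a)))
    else if i == b then w i * expR (- (gamma / K%:R * (d / (2 * rex3_p w b))))
    else w i.

(* Expected value (over the internal randomization of REX3: a_t, b_t drawn
   independently from p(t)) of the gain (1/2) sum (x_{a_t}(t) + x_{b_t}(t))
   accumulated over the n rounds t, t+1, ..., t+n-1, starting with weights w. *)
Fixpoint rex3_egain (n t : nat) (w : 'I_K -> R) : R :=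
  match n with
  | 0 => 0
  | n'.+1 =>
      \sum_(a < K) \sum_(b < K)
        rex3_p w a * rex3_p w b *
        ((x t a + x t b) / 2 + rex3_egain n' t.+1 (rex3_update t w a b))
  end.

Definition rex3_expected_gain (T : nat) : R := rex3_egain T 0 (fun _ => 1).

End REX3.

Definition cumgain (R : realType) (K : nat) (x : nat -> 'I_K -> R) (T : nat)
  (i : 'I_K) : R := \sum_(t < T) x t i.

Definition Gmax (R : realType) (K : nat) (x : nat -> 'I_K -> R) (T : nat) : R :=
  match [pick i : 'I_K] with
  | Some i0 => \big[Num.max/cumgain x T i0]_(i < K) cumgain x T i
  | None => 0
  end.

Definition Gmin (R : realType) (K : nat) (x : nat -> 'I_K -> R) (T : nat) : R :=
  match [pick i : 'I_K] with
  | Some i0 => \big[Num.min/cumgain x T i0]_(i < K) cumgain x T i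
  | None => 0
  end.

Definition rex3_tau (R : realType) (K : nat) (x : nat -> 'I_K -> R) (T : nat) : R :=
  expR 1 * Gmax x T - (4 - expR 1) * Gmin x T.

Definition rex3_gamma (R : realType) (K : nat) (x : nat -> 'I_K -> R) (T : nat) : R :=
  let tau := rex3_tau x T in
  if tau == 0 then 2^-1
  else Num.min 2^-1 (Num.sqrt (K%:R * ln K%:R / tau)).

(* Main.v *)
Require Import Defs.
From HB Require Import structures.
From mathcomp Require Import all_boot all_order all_algebra.
From mathcomp Require Import all_classical all_reals all_analysis.
From mathcomp Require Import ring lra.
Import Order.TTheory GRing.Theory Num.Theory.
Local Open Scope ring_scope.
Lemma exp_quad (R : realType) (y : R) : y * 2 <= 1 -> expR y <= 1 + y + 2 * y ^+ 2.
Proof.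
move=> hy.
have h1 := expR_ge1Dx (- y).
have hQ : 0 <= 1 + y + 2 * y ^+ 2 by nra.
have h2 : 1 <= (1 + y + 2 * y ^+ 2) * expR (- y).
  apply: (le_trans _ (ler_wpM2l hQ h1)); nra.
have := ler_wpM2l (ltW (expR_gt0 y)) h2.
by rewrite mulr1 mulrCA expRxMexpNx_1 mulr1.
Qed.

Lemma alg_step (R : realType) (g k qa qb xa xb ja jb Y : R) :
  0 < g -> g * 2 <= 1 -> 0 < k -> 0 <= qa -> 0 <= qb ->
  0 <= xa <= 1 -> 0 <= xb <= 1 ->
  let pa := (1 - g) * qa + g / k in
  let pb := (1 - g) * qb + g / k in
  let d := xa - xb in
  let Da := d / (2 * pa) in let Db := d / (2 * pb) in
  let lr := g / k in
  let bet := g / (k * (1 - g)) in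
  Y <= lr * (qa * Da - qb * Db) + 4 * lr ^+ 2 * (qa * Da ^+ 2 + qb * Db ^+ 2) ->
  lr * (ja * pb * d / 2 - jb * pa * d / 2) - lr * bet * (pa - pb) * d / 2
    - lr ^+ 2 / (1 - g) * (pa + pb) * (xa + xb)
  <= pa * pb * (lr * (ja * Da - jb * Db) - Y).
Proof.
move=> g0 g1 k0 qa0 qb0 /andP[xa0 xa1] /andP[xb0 xb1] pa pb d Da Db lr bet hY.
have lr0 : 0 < lr by rewrite divr_gt0.
have pa0 : 0 < pa by rewrite /pa ltr_wpDl // mulr_ge0 //; lra.
have pb0 : 0 < pb by rewrite /pb ltr_wpDl // mulr_ge0 //; lra.
have g10 : 1 - g != 0 by apply/lt0r_neq0; lra.
set Z := (X in Y <= X) in hY.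
apply: (@le_trans _ _ (pa * pb * (lr * (ja * Da - jb * Db) - Z))); last first.
  by apply: ler_wpM2l; [apply/mulr_ge0; apply/ltW|lra].
have -> : pa * pb * (lr * (ja * Da - jb * Db) - Z) =
  lr * (ja * pb * d / 2 - jb * pa * d / 2) - lr * bet * (pa - pb) * d / 2
  - lr ^+ 2 * (pb * (qa / pa) + pa * (qb / pb)) * d ^+ 2.
  rewrite /Z /Da /Db /bet /pa /pb /lr; field.
  rewrite g10 (lt0r_neq0 k0) !lt0r_neq0 // ltr_wpDl // !mulr_ge0 // ?ltW //; lra.
rewrite lerD2l lerN2.
have hc : 0 < (1 - g)^-1 by rewrite invr_gt0; lra.
have hqa : qa / pa <= (1 - g)^-1.
  rewrite ler_pdivrMr // /pa mulrDr mulrA mulVf // mul1r lerDl.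
  by rewrite mulr_ge0 ?divr_ge0 ?ltW.
have hqb : qb / pb <= (1 - g)^-1.
  rewrite ler_pdivrMr // /pb mulrDr mulrA mulVf // mul1r lerDl.
  by rewrite mulr_ge0 ?divr_ge0 ?ltW.
have e1 : pb * (qa / pa) + pa * (qb / pb) <= pb * (1 - g)^-1 + pa * (1 - g)^-1.
  by apply: lerD; apply: ler_wpM2l => //; exact: ltW.
have e2 : d ^+ 2 <= xa + xb by rewrite /d; nra.
have e0 : 0 <= pb * (qa / pa) + pa * (qb / pb).
  exact: addr_ge0 (mulr_ge0 (ltW pb0) (divr_ge0 qa0 (ltW pa0))) (mulr_ge0 (ltW pa0) (divr_ge0 qb0 (ltW pb0))).
have H := ler_wpM2l (sqr_ge0 lr) (ler_pM e0 (sqr_ge0 d) e1 e2).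
rewrite -mulrA; apply: le_trans H _; rewrite le_eqVlt; apply/orP; left; apply/eqP; ring.
Qed.
Section Core.
Variable R : realType.
Variable K : nat.
Variable x : nat -> 'I_K -> R.
Variable gam : R.
Hypothesis K0 : (0 < K)%N.
Hypothesis g0 : 0 < gam.
Hypothesis g1 : gam * 2 <= 1.

Definition lr := gam / K%:R.
Definition Wsum (w : 'I_K -> R) := \sum_i w i.
Definition pos (w : 'I_K -> R) := forall i, 0 < w i.
Definition pp (w : 'I_K -> R) i := rex3_p gam w i.
Definition dd t (a b : 'I_K) := x t a - x t b.
Definition Da t w (a b : 'I_K) := dd t a b / (2 * pp w a).
Definition Db t w (a b : 'I_K) := dd t a b / (2 * pp w b).
Definition chat t w a b (i : 'I_K) :=
  (if i == a then Da t w a b else 0) - (if i == b then Db t w a b else 0).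

Lemma Kpos : 0 < K%:R :> R. Proof. by rewrite ltr0n. Qed.

Lemma upd_eq t w a b i :
  rex3_update x gam t w a b i = w i * expR (lr * chat t w a b i).
Proof.
rewrite /rex3_update /chat /Da /Db /dd /psi /lr.
have [<-|nab] := eqVneq a b.
  by case: (i == a); rewrite ?subrr ?mul0r ?subrr ?mulr0 expR0 mulr1.
have [->|nia] := eqVneq i a; first by rewrite (negbTE nab) subr0 mulrA.
have [->|nib] := eqVneq i b; last by rewrite subrr mulr0 expR0 mulr1.
by rewrite sub0r mulrN mulrA.
Qed.

Lemma Wsum_pos w : pos w -> 0 < Wsum w.
Proof.
move=> hw; rewrite /Wsum (bigD1 (Ordinal K0)) //= ltr_wpDr ?hw //.
by apply: sumr_ge0 => i _; apply/ltW.
Qed.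

Lemma pp_ge w i : pos w -> gam / K%:R <= pp w i.
Proof.
move=> hw; rewrite /pp /rex3_p lerDr mulr_ge0 //; last first.
  by rewrite divr_ge0 // ?ltW ?hw ?Wsum_pos. 
move: g0 g1 => ? ?; lra. Qed.

Lemma pp_pos w i : pos w -> 0 < pp w i.
Proof.
move=> hw; apply: lt_le_trans (pp_ge w i hw); rewrite divr_gt0 //; exact: Kpos.
Qed.

Lemma sum_pp w : pos w -> \sum_i pp w i = 1.
Proof.
move=> hw; rewrite /pp /rex3_p big_split /= -mulr_sumr -mulr_suml.
rewrite sumr_const card_ord divff; last by apply/lt0r_neq0/Wsum_pos.
rewrite mulr1 -[gam / K%:R *+ K]mulr_natr divfK ?subrK //; exact/lt0r_neq0/Kpos.
Qed.

Lemma upd_pos t w a b : pos w -> pos (rex3_update x gam t w a b).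
Proof. by move=> hw i; rewrite upd_eq mulr_gt0 ?expR_gt0. Qed.


Definition qq (w : 'I_K -> R) i := w i / Wsum w.

Lemma sum_ind (F : 'I_K -> R) a c :
  \sum_i F i * (if i == a then c else 0) = F a * c.
Proof.
rewrite (bigD1 a) //= eqxx big1 ?addr0 // => i /negbTE ->; by rewrite mulr0.
Qed.

Lemma lr_pos : 0 < lr. Proof. by rewrite /lr divr_gt0 ?Kpos. Qed.

Lemma chat_le t w a b i : (forall i, 0 <= x t i <= 1) -> pos w ->
  lr * chat t w a b i * 2 <= 1.
Proof.
move=> hx hw.
have l0 := lr_pos.
have hA : lr * Da t w a b * 2 <= 1.
  have pa0 := pp_pos w a hw; have pa1 := pp_ge w a hw.
  have -> : lr * Da t w a b * 2 = lr * dd t a b / pp w a.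
    by rewrite /Da; field; apply/lt0r_neq0.
  rewrite ler_pdivrMr // mul1r.
  move: (hx a) (hx b) => /andP[? ?] /andP[? ?]; rewrite /dd -/lr in pa1 *; nra.
have hB : lr * - Db t w a b * 2 <= 1.
  have pa0 := pp_pos w b hw; have pa1 := pp_ge w b hw.
  have -> : lr * - Db t w a b * 2 = lr * - dd t a b / pp w b.
    by rewrite /Db; field; apply/lt0r_neq0.
  rewrite ler_pdivrMr // mul1r.
  move: (hx a) (hx b) => /andP[? ?] /andP[? ?]; rewrite /dd -/lr in pa1 *; nra.
rewrite /chat; have [->|nia] := eqVneq i a.
  have [eab|nab] := eqVneq a b.
    by rewrite eab /Da /Db subrr mulr0 mul0r; lra.
  by rewrite subr0.
case: ifP => _; rewrite sub0r //.
by rewrite oppr0 mulr0 mul0r; lra.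
Qed.

Lemma r_bound t w a b : (forall i, 0 <= x t i <= 1) -> pos w ->
  ln (Wsum (rex3_update x gam t w a b) / Wsum w) <=
  lr * (qq w a * Da t w a b - qq w b * Db t w a b)
  + 4 * lr ^+ 2 * (qq w a * Da t w a b ^+ 2 + qq w b * Db t w a b ^+ 2).
Proof.
move=> hx hw.
have W0 := Wsum_pos _ hw.
have W'0 := Wsum_pos _ (upd_pos t w a b hw).
set r := Wsum _ / Wsum w.
have r0 : 0 < r by rewrite divr_gt0.
have eW : r = \sum_i qq w i * expR (lr * chat t w a b i).
  by rewrite /r /Wsum mulr_suml; apply: eq_bigr => i _; rewrite upd_eq /qq mulrAC.
set A := fun i => if i == a then Da t w a b else 0.
set B := fun i => if i == b then Db t w a b else 0.
set A2 := fun i => if i == a then Da t w a b ^+ 2 else 0.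
set B2 := fun i => if i == b then Db t w a b ^+ 2 else 0.
have pw : forall i, qq w i * expR (lr * chat t w a b i) <= qq w i
   + lr * (qq w i * A i - qq w i * B i) + 4 * lr ^+ 2 * (qq w i * A2 i + qq w i * B2 i).
  move=> i.
  have q0 : 0 <= qq w i by rewrite /qq divr_ge0 // ltW.
  have hc : chat t w a b i = A i - B i by [].
  have hsq : chat t w a b i ^+ 2 <= 2 * (A2 i + B2 i).
    rewrite hc /A /B /A2 /B2; have := sqr_ge0 (Da t w a b + Db t w a b); have := sqr_ge0 (Da t w a b); have := sqr_ge0 (Db t w a b).
    case: (i == a); case: (i == b) => /=; nra.
  have he := @exp_quad R _ (chat_le t w a b i hx hw).
  apply: le_trans (ler_wpM2l q0 he) _.
  have : qq w i * lr ^+ 2 * chat t w a b i ^+ 2 <= qq w i * lr ^+ 2 * (2 * (A2 i + B2 i)).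
    by rewrite ler_wpM2l // mulr_ge0 // sqr_ge0.
  rewrite hc; lra.
have eS : \sum_i (qq w i + lr * (qq w i * A i - qq w i * B i)
      + 4 * lr ^+ 2 * (qq w i * A2 i + qq w i * B2 i)) =
    1 + lr * (qq w a * Da t w a b - qq w b * Db t w a b)
    + 4 * lr ^+ 2 * (qq w a * Da t w a b ^+ 2 + qq w b * Db t w a b ^+ 2).
  rewrite big_split big_split /= -!mulr_sumr sumrB big_split /= /A /B /A2 /B2 !sum_ind.
  by rewrite /qq -mulr_suml divff //; apply/lt0r_neq0.
have hr : r <= 1 + lr * (qq w a * Da t w a b - qq w b * Db t w a b)
    + 4 * lr ^+ 2 * (qq w a * Da t w a b ^+ 2 + qq w b * Db t w a b ^+ 2).
  by rewrite -eS eW; apply: ler_sum => i _; exact: pw.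
have := @le_ln1Dx R (r - 1); rewrite [1 + _]addrC subrK => h.
have := h ltac:(lra); lra.
Qed.

Definition bet := gam / (K%:R * (1 - gam)).
Definition Hval t w (a b j : 'I_K) :=
  lr * ((a == j)%:R * pp w b * dd t a b / 2 - (b == j)%:R * pp w a * dd t a b / 2)
  - lr * bet * (pp w a - pp w b) * dd t a b / 2
  - lr ^+ 2 / (1 - gam) * (pp w a + pp w b) * (x t a + x t b).
Definition Psi (w : 'I_K -> R) j := ln (Wsum w) - ln (w j).

Lemma step t w a b j : (forall i, 0 <= x t i <= 1) -> pos w ->
  Hval t w a b j <= pp w a * pp w b * (Psi w j - Psi (rex3_update x gam t w a b) j).
Proof.
move=> hx hw.
have W0 := Wsum_pos _ hw.
have W'0 := Wsum_pos _ (upd_pos t w a b hw).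
have e1 : Psi w j - Psi (rex3_update x gam t w a b) j
    = lr * chat t w a b j - ln (Wsum (rex3_update x gam t w a b) / Wsum w).
  rewrite /Psi upd_eq lnM ?posrE ?hw ?expR_gt0 // expRK ln_div ?posrE //; ring.
have e2 : chat t w a b j = (a == j)%:R * Da t w a b - (b == j)%:R * Db t w a b.
  rewrite /chat [j == a]eq_sym [j == b]eq_sym.
  by case: (a == j); case: (b == j) => /=; rewrite ?mul1r ?mul0r.
rewrite e1 e2.
have q0 : forall i, 0 <= qq w i by move=> i; rewrite /qq divr_ge0 // ltW.
exact: (@alg_step R gam K%:R (qq w a) (qq w b) (x t a) (x t b) (a==j)%:R (b==j)%:R _
  g0 g1 Kpos (q0 a) (q0 b) (hx a) (hx b) (r_bound t w a b hx hw)).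
Qed.

Definition gt t w := \sum_i pp w i * x t i.
Definition XX t := \sum_i x t i.

Lemma ind_sum (F : 'I_K -> R) j : \sum_b (b == j)%:R * F b = F j.
Proof.
rewrite (bigD1 j) //= eqxx mul1r big1 ?addr0 // => i /negbTE ->; by rewrite mul0r.
Qed.

Lemma lin6 (u v : 'I_K -> R) j c1 c2 c3 c4 c5 c6 :
  \sum_b (c1 * u b + c2 * v b + c3 * (u b * v b) + c4 + c5 * ((b == j)%:R * 1)
          + c6 * ((b == j)%:R * v b))
  = c1 * \sum_b u b + c2 * \sum_b v b + c3 * \sum_b (u b * v b) + c4 * K%:R
    + c5 + c6 * v j.
Proof.
rewrite !big_split /= -!mulr_sumr !ind_sum sumr_const card_ord mulr1.
by rewrite -[c4 *+ K]mulr_natr.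
Qed.

Lemma sum_pp2 w : pos w -> \sum_a \sum_b pp w a * pp w b = 1.
Proof. by move=> hw; rewrite -big_distrlr /= sum_pp // mulr1. Qed.

Lemma sum_g t w : pos w ->
  \sum_a \sum_b pp w a * pp w b * ((x t a + x t b) / 2) = gt t w.
Proof.
move=> hw.
rewrite (eq_bigr (fun a => pp w a * x t a / 2 + pp w a / 2 * gt t w)); last first.
  move=> a _.
  rewrite (eq_bigr (fun b => (pp w a * x t a / 2) * pp w b + 0 * x t b
     + (pp w a / 2) * (pp w b * x t b) + 0 + 0 * ((b == a)%:R * 1)
     + 0 * ((b == a)%:R * x t b))); last by move=> b _; ring.
  by rewrite lin6 sum_pp // /gt; ring.
rewrite (eq_bigr (fun a => gt t w / 2 * pp w a + (1 / 2) * (pp w a * x t a)));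
  last by move=> a _; ring.
by rewrite big_split /= -!mulr_sumr sum_pp // -/(gt t w); lra.
Qed.

Definition L2 := lr ^+ 2 / (1 - gam).
Definition BB := lr * bet.

Lemma sum_H t w j : pos w ->
  \sum_a \sum_b Hval t w a b j =
  lr * (x t j - gt t w) - BB * (K%:R * gt t w - XX t) - 2 * L2 * (K%:R * gt t w + XX t).
Proof.
move=> hw.
rewrite (eq_bigr (fun a =>
   ((a == j)%:R * x t a * (lr / 2) + x t a * (BB / 2 - L2))
   + pp w a * (BB / 2 - L2) * XX t
   + ((a == j)%:R * (- lr * gt t w / 2) + (- BB / 2 - L2) * gt t w)
   + pp w a * x t a * (- BB / 2 - L2) * K%:R
   + pp w a * x t a * (- lr / 2)
   + pp w a * (lr * x t j / 2))); last first.
  move=> a _.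
  rewrite (eq_bigr (fun b =>
     (lr * (a == j)%:R * x t a / 2 + BB * x t a / 2 - L2 * x t a) * pp w b
     + (BB * pp w a / 2 - L2 * pp w a) * x t b
     + (- lr * (a == j)%:R / 2 - BB / 2 - L2) * (pp w b * x t b)
     + (- BB * pp w a * x t a / 2 - L2 * pp w a * x t a)
     + (- lr * pp w a * x t a / 2) * ((b == j)%:R * 1)
     + (lr * pp w a / 2) * ((b == j)%:R * x t b))); last first.
    move=> b _; rewrite /Hval /dd /L2 /BB; lra.
  by rewrite lin6 sum_pp // /gt /XX; ring.
rewrite (eq_bigr (fun a =>
   ((BB / 2 - L2) * XX t + lr * x t j / 2) * pp w a
   + (BB / 2 - L2) * x t a
   + ((- BB / 2 - L2) * K%:R - lr / 2) * (pp w a * x t a)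
   + (- BB / 2 - L2) * gt t w
   + (- lr * gt t w / 2) * ((a == j)%:R * 1)
   + (lr / 2) * ((a == j)%:R * x t a))); last by move=> a _; ring.
by rewrite lin6 sum_pp // -/(gt t w) -/(XX t); lra.
Qed.

Lemma Psi_ge0 w j : pos w -> 0 <= Psi w j.
Proof.
move=> hw; rewrite /Psi subr_ge0 ler_ln ?posrE ?hw ?Wsum_pos //.
rewrite /Wsum (bigD1 j) //= lerDl; apply: sumr_ge0 => i _; exact/ltW.
Qed.

Lemma dsum3 (F G H2 : 'I_K -> 'I_K -> R) c1 c2 :
  \sum_a \sum_b (c1 * F a b - c2 * G a b + H2 a b)
  = c1 * (\sum_a \sum_b F a b) - c2 * (\sum_a \sum_b G a b) + \sum_a \sum_b H2 a b.
Proof.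
symmetry; rewrite !mulr_sumr -sumrB -big_split; apply: eq_bigr => a _ /=.
by rewrite !mulr_sumr -sumrB -big_split.
Qed.

Lemma dsum2 (F G : 'I_K -> 'I_K -> R) :
  \sum_a \sum_b (F a b + G a b) = \sum_a \sum_b F a b + \sum_a \sum_b G a b.
Proof.
rewrite -big_split; apply: eq_bigr => a _ /=; by rewrite -big_split.
Qed.

Variable T : nat.
Hypothesis hxT : forall s i, (s < T)%N -> 0 <= x s i <= 1.

Definition cc := BB - 2 * L2.
Definition kap := lr + BB * K%:R + 2 * L2 * K%:R.

Lemma main_ind j n : forall t w, pos w -> (t + n <= T)%N ->
  \sum_(s < n) (lr * x (t + s)%N j + cc * XX (t + s)%N)
    - kap * rex3_egain x gam n t w <= Psi w j.
Proof.
elim: n => [|n IH] t w hw htn.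
  by rewrite big_ord0 /= mulr0 subr0; exact: Psi_ge0.
have hx : forall i, 0 <= x t i <= 1 by move=> i; apply: hxT; rewrite -addn1; apply: leq_trans htn; rewrite leq_add2l.
set e := fun a b => rex3_egain x gam n t.+1 (rex3_update x gam t w a b).
have eg : rex3_egain x gam n.+1 t w
    = \sum_a \sum_b pp w a * pp w b * ((x t a + x t b) / 2)
      + \sum_a \sum_b pp w a * pp w b * e a b.
  rewrite -dsum2 /=; apply: eq_bigr => a _; apply: eq_bigr => b _.
  by rewrite mulrDr.
rewrite eg sum_g //.
rewrite big_ord_recl /= addn0.
under eq_bigr do rewrite /bump /= addnS -addSn.
set S' := \sum_(s < n) _.
have IHab : forall a b, S' - kap * e a b <= Psi (rex3_update x gam t w a b) j.
  move=> a b; apply: IH; first exact: upd_pos.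
  by rewrite addSn -addnS.
have eR : Psi w j = \sum_a \sum_b pp w a * pp w b * Psi w j.
  rewrite -[LHS]mul1r -(sum_pp2 w hw) mulr_suml; apply: eq_bigr => a _.
  by rewrite mulr_suml.
rewrite [X in _ <= X]eR.
have eL : lr * x t j + cc * XX t + S' - kap * (gt t w + \sum_a \sum_b pp w a * pp w b * e a b)
  = \sum_a \sum_b (S' * (pp w a * pp w b) - kap * (pp w a * pp w b * e a b)
                     + Hval t w a b j).
  rewrite dsum3 sum_pp2 // sum_H // /cc /kap; lra.
rewrite eL; apply: ler_sum => a _; apply: ler_sum => b _.
have h1 := step t w a b j hx hw.
have p0 : 0 <= pp w a * pp w b by rewrite mulr_ge0 // ltW // pp_pos.
have h2 := ler_wpM2l p0 (IHab a b).
lra.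
Qed.

Lemma regret_bound j M : 0 <= M ->
  rex3_egain x gam T 0 (fun _ => 1) <= M ->
  \sum_(s < T) XX s <= K%:R * M ->
  \sum_(s < T) x s j - rex3_egain x gam T 0 (fun _ => 1)
    <= K%:R * ln K%:R / gam + 8 * gam * M.
Proof.
move=> M0 AM SM.
have h1 : pos (fun _ : 'I_K => 1) by move=> i; exact: ltr01.
have := main_ind j T 0 (fun _ => 1) h1 (leqnn T).
have -> : Psi (fun _ => 1) j = ln K%:R.
  by rewrite /Psi ln1 subr0 /Wsum sumr_const card_ord.
rewrite big_split /= -!mulr_sumr.
set A := rex3_egain _ _ _ _ _.
set G := \sum_(s < T) x s j.
set S := \sum_(s < T) XX s.
move=> hm.
have k0 := Kpos.
have l0 := lr_pos.
have gg : 0 < 1 - gam by move: g0 g1 => ? ?; lra.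
have hBB : BB = L2.
  rewrite /BB /bet /L2 /lr; field; apply/andP; split; apply/lt0r_neq0 => //.
have L20 : 0 <= L2 by rewrite /L2 divr_ge0 ?sqr_ge0 ?ltW.
have hSM : L2 * S <= L2 * (K%:R * M) by rewrite ler_wpM2l.
have hAM : L2 * K%:R * A <= L2 * K%:R * M by rewrite ler_wpM2l // mulr_ge0 // ltW.
have hmain : lr * (G - A) <= ln K%:R + 4 * L2 * K%:R * M.
  move: hm; rewrite /cc /kap hBB; lra.
have eD : G - A = K%:R / gam * (lr * (G - A)).
  by rewrite /lr; field; apply/andP; split; apply/lt0r_neq0.
rewrite eD.
have kg : 0 <= K%:R / gam by rewrite divr_ge0 // ltW.
apply: le_trans (ler_wpM2l kg hmain) _.
have -> : K%:R / gam * (ln K%:R + 4 * L2 * K%:R * M)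
    = K%:R * ln K%:R / gam + 4 * (gam / (1 - gam)) * M.
  by rewrite /L2 /lr; field; apply/and3P; split; apply/lt0r_neq0.
rewrite lerD2l.
have : gam / (1 - gam) <= 2 * gam.
  rewrite ler_pdivrMr //; move: g0 g1 => ? ?; nra.
move=> h; have := ler_wpM2r M0 h; move: g0 => ?; nra.
Qed.
End Core.

Section Final.
Variable R : realType.
Variable K : nat.
Variable x : nat -> 'I_K -> R.
Variable T : nat.
Hypothesis K0 : (0 < K)%N.
Hypothesis hx : forall s i, (s < T)%N -> 0 <= x s i <= 1.

Lemma cg_ge0 i : 0 <= cumgain x T i.
Proof. by apply: sumr_ge0 => s _; case/andP: (hx s i (ltn_ord s)). Qed.

Lemma cg_leT i : cumgain x T i <= T%:R.
Proof.
apply: (@le_trans _ _ (\sum_(s < T) (1 : R))).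
  by apply: ler_sum => s _; case/andP: (hx s i (ltn_ord s)).
by rewrite sumr_const card_ord.
Qed.

Lemma Gmax_ge i : cumgain x T i <= Gmax x T.
Proof.
rewrite /Gmax; case: pickP => [i0 _|h]; last by have := h i.
by rewrite (bigD1 i) //= le_max lexx.
Qed.

Lemma Gmax_att : exists j, Gmax x T = cumgain x T j.
Proof.
rewrite /Gmax; case: pickP => [i0 _|h]; last by have := h (Ordinal K0).
apply: (big_ind (fun y => exists j, y = cumgain x T j)); first by exists i0.
  move=> y z [j1 ->] [j2 ->]; case: (leP (cumgain x T j1) (cumgain x T j2)) => _.
    by exists j2.
  by exists j1.
by move=> j _; exists j.
Qed.

Lemma Gmin_le i : Gmin x T <= cumgain x T i.
Proof.
rewrite /Gmin; case: pickP => [i0 _|h]; last by have := h i.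
by rewrite (bigD1 i) //= ge_min lexx.
Qed.

Lemma Gmin_ge0 : 0 <= Gmin x T.
Proof.
rewrite /Gmin; case: pickP => [i0 _|h]; last by [].
apply: (big_ind (fun y => 0 <= y)); first exact: cg_ge0.
  by move=> y z y0 z0; rewrite le_min y0 z0.
by move=> j _; exact: cg_ge0.
Qed.

End Final.

Lemma le_sqrt_sq (R : realType) (a b : R) : 0 <= a -> a ^+ 2 <= b -> a <= Num.sqrt b.
Proof.
move=> a0 ab.
have b0 : 0 <= b by apply: le_trans ab; exact: sqr_ge0.
have s0 := sqrtr_ge0 b.
have s2 := sqr_sqrtr b0.
nra.
Qed.

Lemma e_bounds (R : realType) : 9 / 4 <= expR 1 :> R /\ expR 1 <= 4 :> R.
Proof.
have e1 : expR 1 = expR (2^-1) * expR (2^-1) :> R.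
  by rewrite -expRD; congr expR; field.
have h1 := @expR_ge1Dx R (2^-1).
have h2 := @expR_ge1Dx R (- 2^-1).
have h3 := @expRxMexpNx_1 R (2^-1).
have p := @expR_gt0 R (2^-1).
rewrite e1; split; nra.
Qed.

Theorem corollary2 (R : realType) :
  exists C c0 : R, 0 < C /\ 0 <= c0 /\
  forall (K T : nat) (x : nat -> 'I_K -> R),
    (2 <= K)%N -> (1 <= T)%N ->
    (forall (t : nat) (i : 'I_K), (t < T)%N -> 0 <= x t i <= 1) ->
    c0 * (K%:R * ln K%:R) <= T%:R ->
    Gmax x T - rex3_expected_gain x (rex3_gamma x T) T
      <= C * Num.sqrt (K%:R * ln K%:R * T%:R).
Proof.
exists 40, 1; split; first lra; split; first lra.
move=> K T x K2 T1 hx hT.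
have K0 : (0 < K)%N by apply: leq_trans K2.
have lnK : 0 < ln (K%:R : R) by apply: ln_gt0; rewrite ltr1n.
have Kp : 0 < K%:R :> R by rewrite ltr0n.
rewrite mul1r in hT.
set KL := K%:R * ln K%:R in hT *.
have KL0 : 0 < KL by rewrite mulr_gt0.
set v := Num.sqrt (KL * T%:R).
have KLv : KL <= v by apply: le_sqrt_sq; [exact: ltW | nra].
have v0 : 0 <= v by exact: sqrtr_ge0.
set G := Gmax x T.
set Gm := Gmin x T.
have [j hj] := @Gmax_att R K x T K0.
have Gm0 : 0 <= Gm by exact: (@Gmin_ge0 R K x T hx).
have GmG : Gm <= G by apply: le_trans (@Gmin_le R K x T j) _; rewrite /G hj.
have GT : G <= T%:R by rewrite /G hj; exact: (@cg_leT R K x T hx j).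
have [e1 e2] := e_bounds R.
set tau := rex3_tau x T.
have etau : tau = expR 1 * G - (4 - expR 1) * Gm by [].
have tlo : G <= 2 * tau by rewrite etau; nra.
have thi : tau <= 4 * T%:R by rewrite etau; nra.
have hS : \sum_(s < T) XX R K x s <= K%:R * G.
  rewrite /XX exchange_big /=.
  apply: (@le_trans _ _ (\sum_(i < K) G)).
    by apply: ler_sum => i _; exact: (@Gmax_ge R K x T i).
  by rewrite sumr_const card_ord mulr_natl.
set gam := rex3_gamma x T.
have key : [/\ 0 < gam, gam * 2 <= 1 & KL / gam + 8 * gam * G <= 40 * v].
  rewrite /gam /rex3_gamma -/tau.
  case: eqP => [t00|tn0].
    rewrite invrK; split; [by rewrite invr_gt0 | by rewrite mulVf |].
    rewrite t00 in tlo; nra.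
  have tpos : 0 < tau by rewrite lt_neqAle eq_sym; apply/andP; split; [apply/eqP|nra].
  set s := Num.sqrt (KL / tau).
  have s2 : s ^+ 2 = KL / tau by rewrite sqr_sqrtr // divr_ge0 // ltW.
  have s0 : 0 < s by rewrite sqrtr_gt0 divr_gt0.
  have eKL : KL = s ^+ 2 * tau by rewrite s2 divfK //; apply/lt0r_neq0.
  have h2 : (2^-1 : R) * 2 = 1 by rewrite mulVf.
  case: (leP (2^-1) s) => hs.
    rewrite invrK; split; [by rewrite invr_gt0 | by rewrite mulVf |].
    have hs' : 1 <= s * 2 by have := ler_wpM2r (ler0n R 2) hs; rewrite h2.
    have h4 : 1 <= 4 * s ^+ 2 by nra.
    have : tau <= 4 * KL by have := ler_wpM2l (ltW tpos) h4; rewrite eKL; lra.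
    nra.

  have hs' : s * 2 < 1 by have := ltr_pM2r (ltr0n R 2) s (2^-1); rewrite h2 => ->.
  split => //; first lra.
  have eKs : KL / s = s * tau by rewrite eKL; field; apply/lt0r_neq0.
  rewrite eKs.
  have hst : s * tau / 2 <= v.
    apply: le_sqrt_sq; first by rewrite divr_ge0 // mulr_ge0 // ltW.
    have -> : (s * tau / 2) ^+ 2 = KL * tau / 4 by rewrite eKL; field.
    nra.
  nra.
case: key => g0 g1 kb.
rewrite /rex3_expected_gain -/gam.
set A := rex3_egain x gam T 0 (fun _ => 1).
case: (leP A G) => hAG; last by nra.
have G0 : 0 <= G by apply: le_trans Gm0 GmG.
have := @regret_bound R K x gam K0 g0 g1 T hx j G G0 hAG hS.
rewrite /G hj -/(cumgain x T j) => h.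
apply: le_trans h _; rewrite -hj -/G -/KL; lra.
Qed.
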